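(* Let $m>3$ be an odd integer, let $G=\mathbb{Z}_{2m}$ and $H=\{0,m\}\le G$. For $1\le i\le\frac{m-1}{2}$ let $S_i=\{i,m-i,m+i,2m-i\}\subseteq\mathbb{Z}_{2m}$. Then the family $\{S_i:1\le i\le \frac{m-1}{2}\}$ partitions $G\setminus H$ and is a $(2m,\frac{m-1}{2},4,2,2m-2)$-DPDF and a $(2m,\frac{m-1}{2},4,2m-6,0)$-EPDF in $G$.
   Context: In an additive group $G$ with identity $0$, let $G^*=G\setminus\{0\}$. For $D\subseteq G$, $\Delta(D)$ is the multiset $\{x-y:x,y\in D,x\ne y\}$; for $D_1,D_2\subseteq G$, $\Delta(D_1,D_2)$ is the multiset $\{x-y:x\in D_1,y\in D_2\}$. For a family $A=\{A_1,\dots,A_s\}$ of pairwise disjoint subsets, ${\rm Int}(A)=\bigcup_i\Delta(A_i)$ and ${\rm Ext}(A)=\bigcup_{i\ne j}\Delta(A_i,A_j)$ (multiset unions). For $|G|=v$, a $(v,s,k,\lambda,\mu)$-DPDF is a family of $s$ pairwise disjoint $k$-subsets of $G^*$ with union $S$ such that ${\rm Int}(A)$ contains each element of $S$ exactly $\lambda$ times and each element of $G\setminus(S\cup\{0\})$ exactly $\mu$ times; a $(v,s,k,\lambda,\mu)$-EPDF is defined the same way using ${\rm Ext}(A)$. A family partitions a set $X$ if its members are pairwise disjoint with union $X$. *)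

(* Defs.v *)
From HB Require Import structures.
From mathcomp Require Import all_boot all_order all_algebra.
Set Implicit Arguments. Unset Strict Implicit. Unset Printing Implicit Defensive.
Import GRing.Theory.
Local Open Scope ring_scope.

(* multiplicity of x in Int(A) = union_i Delta(A_i) *)
Definition int_mult (G : finZmodType) (s : nat) (A : 'I_s -> {set G}) (x : G) : nat :=
  (\sum_(i < s) #|[set p : G * G | [&& p.1 \in A i, p.2 \in A i, p.1 != p.2
                                      & (p.1 - p.2)%R == x]]|)%N.

(* multiplicity of x in Ext(A) = union_{i<>j} Delta(A_i, A_j) *)
Definition ext_mult (G : finZmodType) (s : nat) (A : 'I_s -> {set G}) (x : G) : nat :=
  (\sum_(i < s) \sum_(j < s | i != j)
     #|[set p : G * G | [&& p.1 \in A i, p.2 \in A j & (p.1 - p.2)%R == x]]|)%N.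

Definition pairwise_disjoint (G : finType) (s : nat) (A : 'I_s -> {set G}) : Prop :=
  forall i j : 'I_s, i != j -> [disjoint A i & A j].

Definition partitions (G : finType) (s : nat) (A : 'I_s -> {set G}) (X : {set G}) : Prop :=
  pairwise_disjoint A /\ \bigcup_(i < s) A i = X.

Definition pdf_base (G : finZmodType) (v s k : nat) (A : 'I_s -> {set G}) : Prop :=
  [/\ #|G| = v, forall i, #|A i| = k, forall i, (0 : G) \notin A i
    & pairwise_disjoint A].

Definition DPDF (G : finZmodType) (v s k lam mu : nat) (A : 'I_s -> {set G}) : Prop :=
  pdf_base v k A /\
  forall x : G, x != 0 ->
    int_mult A x = (if x \in \bigcup_(i < s) A i then lam else mu).

Definition EPDF (G : finZmodType) (v s k lam mu : nat) (A : 'I_s -> {set G}) : Prop :=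
  pdf_base v k A /\
  forall x : G, x != 0 ->
    ext_mult A x = (if x \in \bigcup_(i < s) A i then lam else mu).

(* S_i = {i, m-i, m+i, 2m-i} in Z_{2m}, indexed by i.+1 for i : 'I_((m-1)/2) *)
Definition Sfam (m : nat) (i : 'I_((m - 1) %/ 2)) : {set 'Z_(2 * m)} :=
  [set (i.+1)%:R; (m - i.+1)%:R; (m + i.+1)%:R; (2 * m - i.+1)%:R].

Definition Hsub (m : nat) : {set 'Z_(2 * m)} := [set 0; m%:R].

(* Main.v *)
Require Import Defs.
From mathcomp Require Import all_boot all_order all_algebra.
From mathcomp Require Import zify ring.
Set Implicit Arguments. Unset Strict Implicit. Unset Printing Implicit Defensive.
Import GRing.Theory.
Local Open Scope ring_scope.

Lemma gt1 m : (3 < m)%N -> (1 < 2 * m)%N. Proof. lia. Qed.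

Lemma valZ m (hm : (3 < m)%N) k : val (k%:R : 'Z_(2 * m)) = (k %% (2 * m))%N.
Proof. exact: (val_Zp_nat (gt1 hm) k). Qed.

Lemma valZlt m (hm : (3 < m)%N) (y : 'Z_(2 * m)) : (nat_of_ord y < 2 * m)%N.
Proof. have := ltn_ord y; have := Zp_cast (gt1 hm); simpl; lia. Qed.

Lemma natZ m (y : 'Z_(2 * m)) : (nat_of_ord y)%:R = y.
Proof. exact: natr_Zp. Qed.

Lemma eqZ m (hm : (3 < m)%N) k l :
  ((k%:R : 'Z_(2 * m)) == l%:R) = (k %% (2 * m) == l %% (2 * m))%N.
Proof. by rewrite -val_eqE /= !valZ. Qed.

Lemma cardG m (hm : (3 < m)%N) : #|'Z_(2 * m)| = (2 * m)%N.
Proof. by rewrite card_ord Zp_cast // gt1. Qed.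

Lemma kerD m (hm : (3 < m)%N) (z : 'Z_(2 * m)) :
  z + z = 0 -> z = 0 \/ z = m%:R.
Proof.
rewrite -(natZ z) -natrD => /(congr1 val); rewrite valZ //= => H.
have lt := valZlt hm z.
have : (nat_of_ord z + nat_of_ord z = 0 \/ nat_of_ord z + nat_of_ord z = 2 * m)%N.
  case: (ltnP (nat_of_ord z + nat_of_ord z) (2 * m)) => Hs.
    by left; move: H; rewrite modn_small.
  right; move: H; rewrite -(subnK Hs) modnDr modn_small; lia.
rewrite natZ; case=> E.
  by left; apply/val_inj => /=; lia.
by right; apply/val_inj; rewrite /= valZ // modn_small; lia.
Qed.

Lemma valD m (hm : (3 < m)%N) (a b : 'Z_(2 * m)) :
  nat_of_ord (a + b) = ((a + b) %% (2 * m))%N.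
Proof. by rewrite -{1}(natZ a) -{1}(natZ b) -natrD valZ. Qed.

Lemma hh m (hm : (3 < m)%N) : (m%:R : 'Z_(2 * m)) + m%:R = 0.
Proof. by apply/val_inj; rewrite -natrD valZ //= addnn -mul2n modnn. Qed.

Lemma h0 m (hm : (3 < m)%N) : (m%:R : 'Z_(2 * m)) != 0.
Proof. apply/eqP => /(congr1 val); rewrite valZ //= modn_small; lia. Qed.

Lemma notdbl m (hm : (3 < m)%N) (hodd : odd m) (y : 'Z_(2 * m)) :
  y + y != m%:R.
Proof.
apply/eqP => /(congr1 (@nat_of_ord _)); rewrite valD // valZ //.
have := valZlt hm y; nia.
Qed.

Lemma dbl m (hm : (3 < m)%N) (hodd : odd m) (c : 'Z_(2 * m)) :
  exists y : 'Z_(2 * m), y + y = c \/ y + y = c + m%:R.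
Proof.
have lt := valZlt hm c.
case: (boolP (odd c)) => oc.
  exists (((c + m) %/ 2)%N%:R); right.
  rewrite -natrD -(natZ c) -natrD; apply/val_inj; rewrite !valZ //; rewrite (modn_small lt); congr (_ %% _)%N; lia.
exists (((nat_of_ord c) %/ 2)%N%:R); left.
rewrite -natrD; apply/val_inj; rewrite /= valZ // modn_small; lia.
Qed.

Lemma eqZs m (hm : (3 < m)%N) k l : (k < 2 * m)%N -> (l < 2 * m)%N ->
  ((k%:R : 'Z_(2 * m)) == l%:R) = (k == l).
Proof. by move=> hk hl; rewrite eqZ // !modn_small. Qed.

Definition aa m (i : 'I_((m - 1) %/ 2)) : 'Z_(2 * m) := (i.+1)%:R.

Lemma Sfam_eq m (hm : (3 < m)%N) (i : 'I_((m - 1) %/ 2)) :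
  Sfam i = [set aa i; m%:R - aa i; m%:R + aa i; - aa i].
Proof.
have hi := ltn_ord i.
rewrite /Sfam /aa natrB; last by lia.
rewrite natrD natrB; last by lia.
by rewrite pchar_Zp ?gt1 // sub0r.
Qed.

Lemma memS m (hm : (3 < m)%N) (i : 'I_((m - 1) %/ 2)) (y : 'Z_(2 * m)) :
  (y \in Sfam i) = (y + y == aa i + aa i) || (y + y == - (aa i + aa i)).
Proof.
have H := hh hm.
rewrite Sfam_eq // !inE.
apply/idP/idP.
- move=> /orP[/orP[/orP[|]|]|] /eqP ->.
  + by rewrite eqxx.
  + apply/orP; right; apply/eqP; rewrite -[RHS]add0r -H; ring.
  + apply/orP; left; apply/eqP; rewrite -[RHS]add0r -H; ring.
  + apply/orP; right; apply/eqP; ring.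
- case/orP => /eqP E.
  + have : (y - aa i) + (y - aa i) = 0.
      have -> : (y - aa i) + (y - aa i) = (y + y) - (aa i + aa i) by ring.
      by rewrite E subrr.
    case/(kerD hm) => /eqP; rewrite ?subr_eq0 ?subr_eq => /eqP ->.
      by rewrite eqxx.
    by rewrite eqxx !orbT.
  + have : (y + aa i) + (y + aa i) = 0.
      have -> : (y + aa i) + (y + aa i) = (y + y) + (aa i + aa i) by ring.
      by rewrite E addNr.
    case/(kerD hm) => E'.
      by move/eqP: E'; rewrite addr_eq0 => /eqP ->; rewrite eqxx !orbT.
    by rewrite (canRL (addrK (aa i)) E') eqxx !orbT.
Qed.

Lemma Dval m (hm : (3 < m)%N) (i : 'I_((m - 1) %/ 2)) :
  aa i + aa i = (2 * i.+1)%:R /\ - (aa i + aa i) = (2 * m - 2 * i.+1)%:R.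
Proof.
have hi := ltn_ord i.
split; first by rewrite /aa -natrD; congr (_%:R); lia.
rewrite natrB; last by lia.
by rewrite pchar_Zp ?gt1 // sub0r /aa -natrD; congr (- _%:R); lia.
Qed.

Lemma Da_ne0 m (hm : (3 < m)%N) (i : 'I_((m - 1) %/ 2)) :
  (aa i + aa i != 0) && (- (aa i + aa i) != 0).
Proof.
have hi := ltn_ord i.
have [-> ->] := Dval hm i.
by rewrite -[0]/((0%N)%:R) !eqZs //; lia.
Qed.

Lemma Da_inj m (hm : (3 < m)%N) (i j : 'I_((m - 1) %/ 2)) :
  (aa i + aa i == aa j + aa j) = (i == j).
Proof.
have hi := ltn_ord i; have hj := ltn_ord j.
have [-> _] := Dval hm i; have [-> _] := Dval hm j.
rewrite eqZs; try lia.
apply/eqP/eqP => [E|->] //; apply/val_inj => /=; lia.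
Qed.

Lemma Da_neq m (hm : (3 < m)%N) (i j : 'I_((m - 1) %/ 2)) :
  (aa i + aa i == - (aa j + aa j)) = false.
Proof.
have hi := ltn_ord i; have hj := ltn_ord j.
have [-> _] := Dval hm i; have [_ ->] := Dval hm j.
rewrite eqZs; try lia.
Qed.

Lemma Sdisj m (hm : (3 < m)%N) : pairwise_disjoint (@Sfam m).
Proof.
move=> i j ij; apply/pred0P => y /=; apply/negbTE/negP => /andP[].
rewrite !memS // => /orP[] /eqP -> /orP[] /eqP.
- by move/eqP; rewrite Da_inj // (negbTE ij).
- by move/eqP; rewrite Da_neq.
- by move/eqP; rewrite eq_sym Da_neq.
- by move/oppr_inj/eqP; rewrite Da_inj // (negbTE ij).
Qed.

Lemma Sunion m (hm : (3 < m)%N) (hodd : odd m) (y : 'Z_(2 * m)) :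
  (y \in \bigcup_(i < (m - 1) %/ 2) Sfam i) = (y \notin Hsub m).
Proof.
apply/bigcupP/idP.
- case=> i _; rewrite memS // !inE => Hy; apply/negP => /orP[] /eqP Ey.
  + move: Hy; rewrite Ey addr0 !(eq_sym 0).
    by case/andP: (Da_ne0 hm i) => /negbTE -> /negbTE ->.
  + move: Hy; rewrite Ey hh // !(eq_sym 0).
    by case/andP: (Da_ne0 hm i) => /negbTE -> /negbTE ->.
- rewrite !inE negb_or => /andP[y0 ym].
  have lt := valZlt hm y.
  have n0 : (nat_of_ord y != 0)%N.
    by apply: contra y0 => /eqP E; apply/eqP/val_inj.
  have nm : (nat_of_ord y != m)%N.
    by apply: contra ym => /eqP E; rewrite -(natZ y) E.
  have [j [hj1 [hj2 hj3]]] : exists j, [/\ (0 < j)%N, (j <= (m - 1) %/ 2)%N &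
      [\/ nat_of_ord y = j, nat_of_ord y = (m - j)%N, nat_of_ord y = (m + j)%N
        | nat_of_ord y = (2 * m - j)%N]].
    case: (ltnP (nat_of_ord y) m) => h1.
      case: (leqP (nat_of_ord y) ((m - 1) %/ 2)) => h2.
        exists (nat_of_ord y); split => //; [lia | by constructor 1].
      exists (m - nat_of_ord y)%N; split; [lia | lia | constructor 2; lia].
    case: (leqP (nat_of_ord y - m) ((m - 1) %/ 2)) => h2.
      exists (nat_of_ord y - m)%N; split; [lia | lia | constructor 3; lia].
    exists (2 * m - nat_of_ord y)%N; split; [lia | lia | constructor 4; lia].
  have hi : (j.-1 < (m - 1) %/ 2)%N by lia.
  exists (Ordinal hi) => //.
  rewrite /Sfam /= prednK // -(natZ y) !inE !eqZs; try lia.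
  by case: hj3 => ->; rewrite eqxx ?orbT.
Qed.

Lemma card4 (T : finType) (a b c d : T) :
  uniq [:: a; b; c; d] -> #|[set a; b; c; d]| = 4%N.
Proof.
move=> U.
have -> : [set a; b; c; d] = [set x in [:: a; b; c; d]].
  by apply/setP => x; rewrite !inE !orbA.
by rewrite cardsE; apply/card_uniqP.
Qed.

Lemma Scard m (hm : (3 < m)%N) (i : 'I_((m - 1) %/ 2)) : #|Sfam i| = 4%N.
Proof.
have hi := ltn_ord i.
rewrite /Sfam card4 //= !inE !eqZs; try lia.
Qed.

Lemma S0 m (hm : (3 < m)%N) (i : 'I_((m - 1) %/ 2)) : (0 : 'Z_(2 * m)) \notin Sfam i.
Proof.
have hi := ltn_ord i.
rewrite /Sfam !inE -[0]/((0%N)%:R) !eqZs; try lia.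
Qed.

Lemma pairs_card (G : finZmodType) (A B : {set G}) (x : G) :
  #|[set p : G * G | [&& p.1 \in A, p.2 \in B & p.1 - p.2 == x]]| =
  #|[set y | (y \in B) && (y + x \in A)]|.
Proof.
have inj : injective (fun y : G => (y + x, y)) by move=> y1 y2 [].
rewrite -(card_imset _ inj); apply: eq_card => -[p1 p2]; rewrite !inE /=.
apply/idP/imsetP.
- case/and3P => h1 h2 /eqP E; exists p2; first by rewrite inE h2 -E addrC subrK.
  by rewrite -E addrC subrK.
- case=> y; rewrite inE => /andP[h1 h2] [-> ->].
  by rewrite h1 h2 /= addrC addKr eqxx.
Qed.

Lemma card_sum (G : finType) (P : pred G) :
  #|[set y | P y]| = (\sum_y (P y : nat))%N.
Proof.
rewrite -sum1_card big_mkcond /=; apply: eq_bigr => y _; rewrite inE.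
by case: (P y).
Qed.

Lemma one_block (G : finType) s (A : 'I_s -> {set G}) (P : 'I_s -> bool) y i0 :
  pairwise_disjoint A -> y \in A i0 ->
  (\sum_i ((y \in A i) && P i : nat))%N = P i0.
Proof.
move=> D hy; rewrite (bigD1 i0) //= hy big1 ?addn0 //.
move=> i ii0; rewrite (disjointFl (D _ _ ii0) hy) //.
Qed.

Lemma no_block (G : finType) s (A : 'I_s -> {set G}) (P : 'I_s -> bool) y :
  y \notin \bigcup_(i < s) A i ->
  (\sum_i ((y \in A i) && P i : nat))%N = 0%N.
Proof.
move=> hy; rewrite big1 // => i _.
case: (boolP (y \in A i)) => // hi; case/negP: hy; apply/bigcupP; by exists i.
Qed.

Lemma int_formula (G : finZmodType) s (A : 'I_s -> {set G}) (x : G) (Q : pred G) :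
  x != 0 -> pairwise_disjoint A ->
  (forall i y, y \in A i -> (y + x \in A i) = Q y) ->
  int_mult A x = #|[set y | (y \in \bigcup_(i < s) A i) && Q y]|.
Proof.
move=> x0 D hQ.
rewrite /int_mult.
under eq_bigr => i _.
  have -> : [set p : G * G | [&& p.1 \in A i, p.2 \in A i, p.1 != p.2 & p.1 - p.2 == x]]
     = [set p : G * G | [&& p.1 \in A i, p.2 \in A i & p.1 - p.2 == x]].
    apply/setP => p; rewrite !inE; case: (p.1 - p.2 =P x) => E; last by rewrite !andbF.
    by rewrite -subr_eq0 E x0.
  rewrite pairs_card card_sum.
over.
rewrite exchange_big card_sum /=; apply: eq_bigr => y _.
case: (boolP (y \in \bigcup_(i < s) A i)) => hy.
  case/bigcupP: (hy) => i0 _ hi0.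
  rewrite (one_block (fun i => y + x \in A i) D hi0) /=.
  by rewrite (hQ _ _ hi0).
by rewrite (no_block (fun i => y + x \in A i) hy).
Qed.

Lemma ext_formula (G : finZmodType) s (A : 'I_s -> {set G}) (x : G) (Q : pred G) :
  pairwise_disjoint A ->
  (forall i y, y \in A i -> (y + x \in A i) = Q y) ->
  ext_mult A x = #|[set y | [&& y \in \bigcup_(i < s) A i,
                               y + x \in \bigcup_(i < s) A i & ~~ Q y]]|.
Proof.
move=> D hQ.
rewrite /ext_mult.
under eq_bigr => i _.
  under eq_bigr => j _ do rewrite pairs_card card_sum.
  rewrite exchange_big /=.
over.
rewrite exchange_big card_sum /=; apply: eq_bigr => y _.
case: (boolP (y \in \bigcup_(i < s) A i)) => hy; last first.
  rewrite big1 // => i _; rewrite big1 // => j _.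
  case: (boolP (y \in A j)) => // hj; case/negP: hy; apply/bigcupP; by exists j.
case/bigcupP: (hy) => j0 _ hj0.
have inner : forall i, (\sum_(j | i != j) ((y \in A j) && ((y + x)%R \in A i) : nat))%N
    = (((y + x)%R \in A i) && (i != j0)).
  move=> i; rewrite big_mkcond /=.
  rewrite andbC -(one_block (fun j => (i != j) && (y + x \in A i)) D hj0) /=.
  apply: eq_bigr => j _; case: (i != j); case: (y \in A j); by case: (y + x \in A i).
under eq_bigr => i _ do rewrite inner.
case: (boolP (y + x \in \bigcup_(i < s) A i)) => hyx; last first.
  by rewrite (no_block (fun i => i != j0) hyx).
case/bigcupP: (hyx) => i1 _ hi1.
rewrite (one_block (fun i => i != j0) D hi1) /= -(hQ _ _ hj0).
case: (i1 =P j0) => [<-|ne]; first by rewrite hi1.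
by rewrite (disjointFr (D _ _ (introN eqP ne)) hi1).
Qed.

Definition Qx m (x : 'Z_(2 * m)) : pred 'Z_(2 * m) :=
  fun y => (y + x + (y + x) == y + y) || (y + x + (y + x) == - (y + y)).

Lemma hQ m (hm : (3 < m)%N) (x : 'Z_(2 * m)) i y :
  y \in Sfam i -> (y + x \in Sfam i) = Qx x y.
Proof.
rewrite /Qx !memS // => /orP[] /eqP ->; first by [].
by rewrite opprK orbC.
Qed.

Lemma oppH m (hm : (3 < m)%N) : - (m%:R : 'Z_(2 * m)) = m%:R.
Proof. by apply/eqP; rewrite eq_sym -addr_eq0 hh. Qed.

Lemma inH m (y : 'Z_(2 * m)) : (y \in Hsub m) = (y == 0) || (y == m%:R).
Proof. by rewrite !inE. Qed.

Lemma DH m (hm : (3 < m)%N) (y : 'Z_(2 * m)) : (y + y == 0) = (y \in Hsub m).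
Proof.
rewrite inH; apply/eqP/idP => [/(kerD hm)[]->|/orP[]/eqP->]; rewrite ?eqxx ?orbT //.
  by rewrite addr0.
exact: hh.
Qed.

Lemma eqD (G : zmodType) (a b k : G) : (a + k == b + k) = (a == b).
Proof. exact: (inj_eq (addIr k)). Qed.

Lemma Q_notH m (hm : (3 < m)%N) (x y : 'Z_(2 * m)) : x \notin Hsub m ->
  Qx x y = (y + y == - x) || (y + y == m%:R - x).
Proof.
move=> xH; rewrite /Qx.
have -> : (y + x + (y + x) == y + y) = false.
  have -> : y + x + (y + x) = x + x + (y + y) by ring.
  by rewrite -{2}(add0r (y + y)) eqD DH // (negbTE xH).
rewrite /= -addr_eq0.
have -> : y + x + (y + x) + (y + y) = (y + y + x) + (y + y + x) by ring.
rewrite DH // inH addr_eq0.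
have -> : y + y + x = y + y - - x by rewrite opprK.
by rewrite subr_eq.
Qed.

Lemma sameD m (hm : (3 < m)%N) (y y0 : 'Z_(2 * m)) :
  y + y = y0 + y0 -> (y == y0) || (y == y0 + m%:R).
Proof.
move=> E.
have : (y - y0) + (y - y0) = 0.
  have -> : (y - y0) + (y - y0) = (y + y) - (y0 + y0) by ring.
  by rewrite E subrr.
case/(kerD hm) => /eqP; rewrite ?subr_eq0 ?subr_eq addrC => ->; by rewrite ?orbT.
Qed.

Lemma diffD m (hm : (3 < m)%N) (hodd : odd m) (y y0 : 'Z_(2 * m)) :
  y + y = y0 + y0 + m%:R -> False.
Proof.
move=> E; apply: (negP (notdbl hm hodd (y - y0))); apply/eqP.
have -> : (y - y0) + (y - y0) = (y + y) - (y0 + y0) by ring.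
by rewrite E; ring.
Qed.

Lemma notH_of_D m (hm : (3 < m)%N) (x y : 'Z_(2 * m)) : x \notin Hsub m ->
  (y + y = - x) \/ (y + y = - x + m%:R) -> y \notin Hsub m.
Proof.
move=> xH E; rewrite -DH //; apply/negP => /eqP E0; case/negP: xH.
rewrite inH; case: E; rewrite E0.
  by move/eqP; rewrite eq_sym oppr_eq0 => ->.
move/eqP; rewrite eq_sym addrC addr_eq0 opprK => /eqP <-; by rewrite eqxx orbT.
Qed.

Lemma int_notH m (hm : (3 < m)%N) (hodd : odd m) (x : 'Z_(2 * m)) : x \notin Hsub m ->
  #|[set y | (y \notin Hsub m) && Qx x y]| = 2%N.
Proof.
move=> xH.
have [y0 E0] := dbl hm hodd (- x).
have -> : [set y | (y \notin Hsub m) && Qx x y] = [set y0; y0 + m%:R].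
  apply/setP => y; rewrite !inE Q_notH // (addrC _ (- x)).
  apply/idP/idP.
  - case/andP => yH /orP[]/eqP Ey; case: E0 => E0.
    + by apply: sameD => //; rewrite Ey E0.
    + by case: (diffD hm hodd (y := y0) (y0 := y)); rewrite Ey E0.
    + by case: (diffD hm hodd (y := y) (y0 := y0)); rewrite Ey E0.
    + by apply: sameD => //; rewrite Ey E0.
  - have E1 : (y0 + m%:R) + (y0 + m%:R) = y0 + y0.
      have -> : (y0 + m%:R) + (y0 + m%:R) = (y0 + y0) + (m%:R + m%:R) by ring.
      by rewrite hh // addr0.
    case/orP => /eqP ->.
      have := notH_of_D hm xH E0; rewrite inH => -> /=.
      by case: E0 => ->; rewrite eqxx ?orbT.
    have yH : y0 + m%:R \notin Hsub m by apply: (notH_of_D hm xH); rewrite E1.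
    move: yH; rewrite inH => -> /=; by rewrite E1; case: E0 => ->; rewrite eqxx ?orbT.
rewrite cards2.
suff -> : (y0 != y0 + m%:R) by [].
by rewrite -{1}(addr0 y0) (inj_eq (addrI y0)) eq_sym h0.
Qed.

Lemma card_A m (hm : (3 < m)%N) (x : 'Z_(2 * m)) : x \notin Hsub m ->
  #|[set y | (y \notin Hsub m) && (y + x \notin Hsub m)]| = (2 * m - 4)%N.
Proof.
move=> xH.
have -> : [set y | (y \notin Hsub m) && (y + x \notin Hsub m)]
    = ~: [set 0; m%:R; - x; m%:R - x].
  apply/setP => y; rewrite !inE -!negb_or addr_eq0.
  have -> : y + x = y - - x by rewrite opprK.
  by rewrite subr_eq !orbA.
have U : uniq [:: 0; m%:R; - x; m%:R - x]; last first.
  by rewrite cardsCs setCK cardG // card4.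
move: xH; rewrite inH negb_or => /andP[x0 xh].
have hn0 := h0 hm.
rewrite /= !inE !negb_or eq_sym hn0 eq_sym oppr_eq0 x0 /=.
have -> : (0 == m%:R - x) = false by rewrite eq_sym subr_eq0 eq_sym (negbTE xh).
have -> : (m%:R == - x) = false.
  by rewrite -(oppH hm) (inj_eq oppr_inj) eq_sym (negbTE xh).
have -> : (m%:R == m%:R - x) = false.
  by rewrite -{1}(addr0 m%:R) (inj_eq (addrI _)) eq_sym oppr_eq0 (negbTE x0).
have -> : (- x == m%:R - x) = false.
  by rewrite -{1}(add0r (- x)) eqD eq_sym (negbTE hn0).
by [].
Qed.

Lemma ext_notH m (hm : (3 < m)%N) (hodd : odd m) (x : 'Z_(2 * m)) : x \notin Hsub m ->
  #|[set y | [&& y \notin Hsub m, y + x \notin Hsub m & ~~ Qx x y]]| = (2 * m - 6)%N.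
Proof.
move=> xH.
have sub : forall y, y \notin Hsub m -> Qx x y -> y + x \notin Hsub m.
  move=> y yH; rewrite /Qx; apply: contraL => yxH.
  move: yxH yH; rewrite -!DH // => /eqP ->.
  by rewrite !(eq_sym 0) oppr_eq0 orbb => ->.
set A := [set y : 'Z_(2 * m) | (y \notin Hsub m) && (y + x \notin Hsub m)].
set B := [set y : 'Z_(2 * m) | (y \notin Hsub m) && Qx x y].
have AB : A :&: B = B.
  apply/setP => y; rewrite !inE.
  case: (boolP (Qx x y)) => Q; rewrite ?andbT ?andbF //.
  case: (boolP ((y == 0) || (y == m%:R))) => //= yH.
  by have := sub y; rewrite !inH => /(_ yH Q) ->.
have := cardsID B A; rewrite AB.
have -> : #|B| = 2%N by apply: int_notH.
have -> : #|A| = (2 * m - 4)%N by apply: card_A.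
move=> E; apply: etrans (_ : _ = #|A :\: B|) _; last by lia.
apply: eq_card => y; rewrite !inE.
by case: ((y == 0) || (y == m%:R)); case: ((y + x == 0) || (y + x == m%:R)); case: (Qx x y).
Qed.

Lemma Qh m (hm : (3 < m)%N) (y : 'Z_(2 * m)) : Qx (m%:R) y.
Proof.
rewrite /Qx; have -> : y + m%:R + (y + m%:R) = (y + y) + (m%:R + m%:R) by ring.
by rewrite hh // addr0 eqxx.
Qed.

Lemma cardH m (hm : (3 < m)%N) : #|Hsub m| = 2%N.
Proof. by rewrite /Hsub cards2 eq_sym h0. Qed.

Theorem mainTheorem4 (m : nat) (hodd : odd m) (hm : (3 < m)%N) :
  partitions (@Sfam m) (~: Hsub m) /\
  DPDF (2 * m) 4 2 (2 * m - 2) (@Sfam m) /\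
  EPDF (2 * m) 4 (2 * m - 6) 0 (@Sfam m).
Proof.
have hU : \bigcup_(i < (m - 1) %/ 2) Sfam i = ~: Hsub m.
  by apply/setP => y; rewrite Sunion // in_setC.
have base : pdf_base (2 * m) 4 (@Sfam m).
  by split; [exact: cardG | exact: Scard | exact: S0 | exact: Sdisj].
split; first by split; [exact: Sdisj | exact: hU].
split; split => // x x0.
- rewrite (int_formula (Q := Qx x) x0 (Sdisj hm) (@hQ m hm x)) hU in_setC.
  case: (boolP (x \in Hsub m)) => xH /=.
  + have -> : x = m%:R by move: xH; rewrite inH (negbTE x0) => /eqP.
    have := cardsC (Hsub m); rewrite cardH // cardG // => E.
    apply: etrans (_ : _ = #|~: Hsub m|) _; last by lia.
    by apply: eq_card => y; rewrite !inE Qh // andbT.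
  + rewrite -[RHS](int_notH hm hodd xH); apply: eq_card => y; by rewrite !inE.
- rewrite (ext_formula (Q := Qx x) (Sdisj hm) (@hQ m hm x)) hU in_setC.
  case: (boolP (x \in Hsub m)) => xH /=.
  + have -> : x = m%:R by move: xH; rewrite inH (negbTE x0) => /eqP.
    apply/eqP; rewrite cards_eq0; apply/eqP/setP => y; by rewrite !inE Qh // !andbF.
  + rewrite -[RHS](ext_notH hm hodd xH); apply: eq_card => y; by rewrite !inE.
Qed.
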